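(* Let $\mathcal H$ be a real Hilbert space and $f\colon\mathcal H\to\left]-\infty,+\infty\right]$ proper, lower semicontinuous, convex, with $\operatorname{int}\operatorname{dom} f\neq\varnothing$, Gâteaux differentiable on $\operatorname{int}\operatorname{dom} f$, and essentially strictly convex. Let $T_1,\dots,T_m\colon\mathcal H\to\mathcal H$ with $\operatorname{int}\operatorname{dom} f\cap\bigcap_{i=1}^m\operatorname{Fix}T_i\neq\varnothing$, and let $\mathcal S(x)=\{x,T_1x,\dots,T_mx\}$. Then $$\operatorname{Fix}\overrightarrow{CC}_{\mathcal S}=\operatorname{int}\operatorname{dom} f\cap\bigcap_{i=1}^m\operatorname{Fix}T_i \quad\text{and}\quad \operatorname{Fix}\overleftarrow{CC}_{\mathcal S}=\operatorname{int}\operatorname{dom} f\cap\bigcap_{i=1}^m\operatorname{Fix}T_i,$$ where for a set-valued map $A$, $\operatorname{Fix}A=\{x: x\in A(x)\}$.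
   Context: Bregman distance: $D_f(x,y)=f(x)-f(y)-\langle\nabla f(y),x-y\rangle$ if $y\in\operatorname{int}\operatorname{dom} f$, $+\infty$ otherwise. Essentially strictly convex: $(\partial f)^{-1}$ is locally bounded on its domain and $f$ is strictly convex on every convex subset of $\operatorname{dom}\partial f$. Forward Bregman circumcenter mapping: for $y\in\mathcal H$ with $\mathcal S(y)\subseteq\operatorname{dom} f$, $\overrightarrow{CC}_{\mathcal S}(y)=\{v\in\operatorname{aff}(\mathcal S(y))\cap\operatorname{int}\operatorname{dom} f: D_f(y,v)=D_f(T_1y,v)=\cdots=D_f(T_my,v)\}$ (empty if $\mathcal S(y)\not\subseteq\operatorname{dom}f$). Backward Bregman circumcenter mapping: for $y\in\mathcal H$ with $\mathcal S(y)\subseteq\operatorname{int}\operatorname{dom} f$, $\overleftarrow{CC}_{\mathcal S}(y)=\{p\in\operatorname{aff}(\mathcal S(y))\cap\operatorname{dom} f: D_f(p,y)=D_f(p,T_1y)=\cdots=D_f(p,T_my)\}$ (empty if $\mathcal S(y)\not\subseteq\operatorname{int}\operatorname{dom} f$). Here $\operatorname{aff}$ denotes affine hull. *)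

(* Defs.v *)
From HB Require Import structures.
From mathcomp Require Import all_boot all_order all_algebra.
From mathcomp Require Import all_classical all_reals all_analysis.
Set Implicit Arguments. Unset Strict Implicit. Unset Printing Implicit Defensive.
Import Order.TTheory GRing.Theory Num.Theory.
Import numFieldNormedType.Exports.
Local Open Scope classical_set_scope.
Local Open Scope ring_scope.

Section Defs.
Context {R : realType} {H : normedModType R}.
Implicit Types (ip : H -> H -> R) (f : H -> \bar R).

(* ip is a real inner product inducing the norm of H; together with
   completeness of H this makes H a real Hilbert space. *)
Definition is_inner_product ip :=
  [/\ forall x y, ip x y = ip y x,
      forall a x y z, ip (a *: x + y) z = a * ip x z + ip y z
    & forall x, ip x x = `|x| ^+ 2].

Definition dom f : set H := [set x | (f x < +oo)%E].

Definition proper_fun f := (forall x, f x != -oo%E) /\ (exists x, dom f x).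

(* convexity of an extended-real-valued function (proper, so no -oo) *)
Definition convex_efun f := forall x y (t : R), 0 < t < 1 ->
  (f (t *: x + (1 - t) *: y)%R <= t%:E * f x + (1 - t)%:E * f y)%E.

Definition strictly_convex_on f (C : set H) := forall x y (t : R),
  C x -> C y -> x != y -> 0 < t < 1 ->
  (f (t *: x + (1 - t) *: y)%R < t%:E * f x + (1 - t)%:E * f y)%E.

Definition convex_subset (C : set H) := forall x y (t : R),
  C x -> C y -> 0 <= t <= 1 -> C (t *: x + (1 - t) *: y).

Definition subdiff ip f (x u : H) :=
  f x \is a fin_num /\ forall y, (f x + (ip u (y - x)%R)%:E <= f y)%E.

Definition dom_subdiff ip f : set H := [set x | exists u, subdiff ip f x u].

Definition inv_subdiff_locally_bounded ip f :=
  forall u, (exists x, subdiff ip f x u) ->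
  exists2 e : R, 0 < e & exists M : R, forall v x,
    `|v - u| < e -> subdiff ip f x v -> `|x| <= M.

Definition essentially_strictly_convex ip f :=
  inv_subdiff_locally_bounded ip f /\
  forall C, convex_subset C -> C `<=` dom_subdiff ip f -> strictly_convex_on f C.

Definition gateaux_grad ip f (x g : H) :=
  f x \is a fin_num /\
  forall h, (fun t : R => (fine (f (x + t *: h)%R) - fine (f x)) / t) @ 0^'
              --> ip g h.

(* Bregman distance, with gf the gradient of f on int dom f *)
Definition bregman ip f (gf : H -> H) (x y : H) : \bar R :=
  if pselect ((interior (dom f)) y)
  then (f x - f y - (ip (gf y) (x - y)%R)%:E)%E
  else +oo%E.

Definition aff (A : set H) : set H :=
  [set v | exists n (p : 'I_n -> H) (l : 'I_n -> R),
     [/\ forall i, A (p i), \sum_i l i = 1 & v = \sum_i l i *: p i]].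

Definition Sset m (T : 'I_m -> H -> H) (y : H) : set H :=
  [set z | z = y \/ exists i, z = T i y].

Definition fwdCC ip f gf m (T : 'I_m -> H -> H) (y : H) : set H :=
  [set v | [/\ Sset T y `<=` dom f, aff (Sset T y) v, interior (dom f) v
           & forall i, bregman ip f gf (T i y) v = bregman ip f gf y v]].

Definition bwdCC ip f gf m (T : 'I_m -> H -> H) (y : H) : set H :=
  [set p | [/\ Sset T y `<=` interior (dom f), aff (Sset T y) p, dom f p
           & forall i, bregman ip f gf p (T i y) = bregman ip f gf p y]].

Definition FixS (A : H -> set H) : set H := [set x | A x x].
Definition Fix (T : H -> H) : set H := [set x | T x = x].

End Defs.

(* Main.v *)
Require Import Defs.
From HB Require Import structures.
From mathcomp Require Import all_boot all_order all_algebra.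
From mathcomp Require Import all_classical all_reals all_analysis.
From mathcomp Require Import lra ring.
Import Order.TTheory GRing.Theory Num.Theory.
Import numFieldNormedType.Exports.
Local Open Scope classical_set_scope.
Local Open Scope ring_scope.

Lemma vecA (R : realType) (H : normedModType R) (u : R) (a b : H) :
  u *: a + (1 - u) *: b = b + u *: (a - b).
Proof. by rewrite scalerBl scale1r scalerBr addrCA addrA. Qed.

Lemma subgrad (R : realType) (H : normedModType R)
  (ip : H -> H -> R) (f : H -> \bar R) (p g : H) :
  proper_fun f -> convex_efun f -> gateaux_grad ip f p g ->
  forall y, (f p + (ip g (y - p))%:E <= f y)%E.
Proof.
move=> [Hm _] Hc [fpfin Hg] y.
move: (Hm y); case Efy: (f y) => [r| |] // _; last by rewrite leey.
rewrite -(fineK fpfin) -EFinD lee_fin.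
set Fp := fine (f p); set h := y - p.
rewrite leNgt; apply/negP => hK.
have hK' : fine (f y) - Fp < ip g h by rewrite Efy /= ltrBlDl.
have := cvgr_gt _ (Hg h) _ hK'.
rewrite near_withinE => H0.
have [e /= e0 He] := iffLR (nbhs_normP _ _) (H0 _).
set t := Num.min (e / 2) (1 / 2).
have t0 : 0 < t by rewrite lt_min !divr_gt0.
have t1 : t < 1 by rewrite gt_min orbC ltr_pdivrMr // mul1r ltr1n.
have te : `|0 - t| < e.
  rewrite sub0r normrN gtr0_norm // gt_min; apply/orP; left.
  by rewrite ltr_pdivrMr // ltr_pMr // ltr1n.
have := He t te.
move=> /(_ (lt0r_neq0 t0)); apply/negP; rewrite -leNgt Efy /=.
have := Hc y p t; rewrite t0 t1 => /(_ isT).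
rewrite vecA -/h Efy -(fineK fpfin) -/Fp -!EFinM -EFinD.
move: (Hm (p + t *: h)); case: (f (p + t *: h)) => [z| |] //= _.
rewrite lee_fin => hz.
rewrite ler_pdivrMr // mulrBl; lra.

Qed.

Arguments subgrad {R H ip f p g}.

Lemma ip0 (R : realType) (H : normedModType R) (ip : H -> H -> R) z :
  is_inner_product ip -> ip 0 z = 0.
Proof.
move=> [_ Hl _]; have := Hl 1 0 0 z; rewrite scale1r addr0 mul1r.
lra.
Qed.

Lemma ipZ2 (R : realType) (H : normedModType R) (ip : H -> H -> R) z u x :
  is_inner_product ip -> ip z (u *: x) = u * ip z x.
Proof.
move=> hip; have [Hs Hl _] := hip.
by rewrite Hs -[u *: x]addr0 Hl ip0 // addr0 Hs.
Qed.

Lemma qconv (R : realType) (H : normedModType R) (b d : H) (t u1 u2 : R) :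
  t *: (b + u1 *: d) + (1 - t) *: (b + u2 *: d)
  = b + (t * u1 + (1 - t) * u2) *: d.
Proof.
rewrite !scalerDr !scalerA addrACA -!scalerDl.
by rewrite [t + _]addrC subrK scale1r.
Qed.

Lemma key (R : realType) (H : normedModType R)
  (ip : H -> H -> R) (f : H -> \bar R) (gf : H -> H) (a b : H) :
  is_inner_product ip -> proper_fun f -> convex_efun f ->
  (forall x, interior (dom f) x -> gateaux_grad ip f x (gf x)) ->
  essentially_strictly_convex ip f ->
  interior (dom f) b -> dom f a -> bregman ip f gf a b = 0%E -> a = b.
Proof.
move=> hip hpr Hc Hgr [_ Hsc] Hb Ha.
have [Hm _] := hpr.
have fbfin : f b \is a fin_num by have [] := Hgr b Hb.
have fafin : f a \is a fin_num.
  by rewrite fin_numE Hm /=; move: Ha; rewrite /dom /= => /lt_eqF ->.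
rewrite /bregman; destruct (pselect (interior (dom f) b)) as [Hb'|]; last by [].
set g := gf b; set d := a - b; set G := ip g d.
rewrite -(fineK fafin) -(fineK fbfin) -!EFinB => /eqP; rewrite eqe => /eqP HG.
set Fa := fine (f a) in HG; set Fb := fine (f b) in HG.
case: (eqVneq a b) => // nab; exfalso.
have d0 : d != 0 by rewrite subr_eq0.
have := nbhs_interior Hb => /nbhs_normP [e /= e0 He].
have nd0 : 0 < `|d| by rewrite normr_gt0.
set s := Num.min (1 / 2) (e / (2 * `|d|)).
have s0 : 0 < s by rewrite lt_min !divr_gt0 // mulr_gt0.
have s1 : s < 1 by rewrite gt_min ltr_pdivrMr // mul1r ltr1n.
have sd : s * `|d| < e.
  have hsx : s <= e / (2 * `|d|) by rewrite ge_min lexx orbT.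
  have hx : e / (2 * `|d|) * `|d| = e / 2.
    by field; rewrite lt0r_neq0.
  have := ler_wpM2r (ltW nd0) hsx; rewrite hx; lra.
pose q u := b + u *: d.
have qE u : u *: a + (1 - u) *: b = q u by rewrite vecA.
pose C := [set x | exists2 u, 0 <= u <= s & x = q u].
have Cint x : C x -> interior (dom f) x.
  case=> u /andP[u0 us] ->; apply: He => /=.
  rewrite /q opprD addNKr normrN normrZ ger0_norm //.
  by apply: le_lt_trans sd; rewrite ler_wpM2r.
have Cconv : convex_subset C.
  move=> x y t [u1 /andP[u10 u1s] ->] [u2 /andP[u20 u2s] ->] /andP[t0 t1].
  exists (t * u1 + (1 - t) * u2); last by rewrite qconv.
  apply/andP; split; nra.
have Csub : C `<=` dom_subdiff ip f.
  move=> x /Cint xi; exists (gf x); have [fx _] := Hgr x xi; split => //.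
  exact: (subgrad hpr Hc (Hgr x xi)).
have val u : 0 <= u <= s -> f (q u) = (Fb + u * G)%:E.
  move=> /andP[u0 us].
  have low := subgrad hpr Hc (Hgr b Hb) (q u).
  have qb : q u - b = u *: d by rewrite /q addrAC subrr add0r.
  rewrite qb ipZ2 // -(fineK fbfin) -/Fb -/g -/G in low.
  case: (eqVneq u 0) => [->|un0].
    by rewrite /q scale0r addr0 -(fineK fbfin) mul0r addr0.
  have := Hc a b u; rewrite lt_neqAle eq_sym un0 u0 (le_lt_trans us s1) /=.
  move=> /(_ isT); rewrite qE -(fineK fafin) -(fineK fbfin) -/Fa -/Fb.
  rewrite -!EFinM -EFinD.
  move: low; case: (f (q u)) => [z| |] //=; rewrite !lee_fin => l1 l2.
  by congr (_%:E); nra.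
have Cs : C (q s) by exists s => //; rewrite lexx ltW.
have C0 : C (q 0) by exists 0 => //; rewrite lexx ltW.
have nq : q s != q 0.
  apply/eqP => /addrI /eqP; rewrite scale0r scaler_eq0 (negbTE d0) orbF.
  by rewrite (negbTE (lt0r_neq0 s0)).
have h2 : 0 < (1 / 2 : R) < 1 by apply/andP; split; lra.
have := Hsc C Cconv Csub (q s) (q 0) (1/2) Cs C0 nq h2; rewrite qconv !val; last first.
- by rewrite lexx ltW.
- by rewrite lexx ltW.
- apply/andP; split; nra.
rewrite -!EFinM -EFinD lte_fin; nra.
Qed.
Arguments key {R H ip f gf a b}.

Lemma breg_self (R : realType) (H : normedModType R)
  (ip : H -> H -> R) (f : H -> \bar R) (gf : H -> H) x :
  is_inner_product ip -> f x \is a fin_num -> bregman ip f gf x x = 0%E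
  \/ ~ interior (dom f) x.
Proof.
move=> hip fx; rewrite /bregman.
destruct (pselect (interior (dom f) x)) as [Hx|Hx]; last by right.
left; rewrite subrr.
have -> : ip (gf x) 0 = 0 by have [Hs _ _] := hip; rewrite Hs ip0.
by rewrite -(fineK fx) -!EFinB !subrr.
Qed.

Lemma aff1 (R : realType) (H : normedModType R) (A : set H) x :
  A x -> aff A x.
Proof.
move=> Ax; exists 1%N, (fun _ => x), (fun _ => 1); split => //.
  by rewrite big_ord1.
by rewrite big_ord1 scale1r.
Qed.

Theorem lemma4p6 (R : realType) (H : completeNormedModType R)
  (ip : H -> H -> R) (f : H -> \bar R) (gf : H -> H)
  (m : nat) (T : 'I_m -> H -> H) :
  is_inner_product ip ->
  proper_fun f -> lower_semicontinuous f -> convex_efun f ->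
  interior (dom f) !=set0 ->
  (forall x, interior (dom f) x -> gateaux_grad ip f x (gf x)) ->
  essentially_strictly_convex ip f ->
  interior (dom f) `&` \bigcap_(i in [set: 'I_m]) Fix (T i) !=set0 ->
  FixS (fwdCC ip f gf T) = interior (dom f) `&` \bigcap_(i in [set: 'I_m]) Fix (T i)
  /\ FixS (bwdCC ip f gf T) = interior (dom f) `&` \bigcap_(i in [set: 'I_m]) Fix (T i).
Proof.
move=> hip hpr _ Hc _ Hgr Hes _.
have self x : interior (dom f) x -> bregman ip f gf x x = 0%E.
  move=> xi; have [fx _] := Hgr x xi.
  by case: (@breg_self _ _ ip f gf x hip fx).
have Sx x : Sset T x x by left.
have STx x i : Sset T x (T i x) by right; exists i.
have Sfix x : (forall i, T i x = x) -> forall z, Sset T x z -> z = x.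
  by move=> Hf z [->|[i ->]].
split; apply/seteqP; split => x.
- case=> HS _ xi Heq; split => // i _.
  apply: (key hip hpr Hc Hgr Hes xi (HS _ (STx x i))).
  by rewrite Heq self.
- case=> xi Hfix; have Hf i : T i x = x by exact: Hfix.
  split => //.
  + by move=> z /(Sfix x Hf) ->; exact: interior_subset.
  + exact: aff1.
  + by move=> i; rewrite Hf.
- case=> HS _ xd Heq; have xi := HS x (Sx x); split => // i _.
  apply/esym; apply: (key hip hpr Hc Hgr Hes (HS _ (STx x i)) xd).
  by rewrite Heq self.
- case=> xi Hfix; have Hf i : T i x = x by exact: Hfix.
  split => //.
  + by move=> z /(Sfix x Hf) ->.
  + exact: aff1.
  + exact: interior_subset.
  + by move=> i; rewrite Hf.
Qed.
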